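(* Let $\alpha,\beta$ be sets, $z\in\beta$, $\mathit{seq}:\beta\times\alpha\to\beta$ and $\mathit{comb}:\beta\times\beta\to\beta$, written $x\oplus y$. Let $\Gamma=\{\mathrm{foldl}(\mathit{seq},z,L) : L \text{ a finite list over }\alpha\}$. If calls $\mathrm{aggregate}(z,\mathit{seq},\mathit{comb},\mathit{rdd})$ have deterministic outcomes, then: (1) $z$ is an identity of $\oplus$ on $\Gamma$; (2) $\oplus$ is closed on $\Gamma$ (i.e. $x\oplus y\in\Gamma$ for $x,y\in\Gamma$); (3) $\oplus$ is commutative on $\Gamma$; (4) $\oplus$ is associative on $\Gamma$.
   Context: Lists are finite; $\mathbin{+\!\!+}$ is concatenation. $\mathrm{foldl}(f,b,[\,])=b$, $\mathrm{foldl}(f,b,[x_1,\dots,x_n])=f(\cdots f(f(b,x_1),x_2)\cdots,x_n)$. An RDD is a list of lists. A partitioning is a function $P$ sending each list $L$ over $\alpha$ to an RDD obtained by splitting $L$ into consecutive (possibly empty) pieces $p_1,\dots,p_n$ with $p_1\mathbin{+\!\!+}\cdots\mathbin{+\!\!+}p_n=L$ and then arbitrarily permuting $[p_1,\dots,p_n]$. $\mathrm{aggregate}_{\mathrm{det}}(z,\mathit{seq},\mathit{comb},[q_1,\dots,q_m])=\mathrm{foldl}(\mathit{comb},z,[\mathrm{foldl}(\mathit{seq},z,q_1),\dots,\mathrm{foldl}(\mathit{seq},z,q_m)])$. Calls $\mathrm{aggregate}(z,\mathit{seq},\mathit{comb},\mathit{rdd})$ have deterministic outcomes if $\mathrm{aggregate}_{\mathrm{det}}(z,\mathit{seq},\mathit{comb},P(L))=\mathrm{foldl}(\mathit{seq},z,L)$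 for all lists $L$ over $\alpha$ and all partitionings $P$. *)

(* Defs.v *)
From Stdlib Require Import List Permutation.
Import ListNotations.

Definition foldl {A B : Type} (f : B -> A -> B) (b : B) (l : list A) : B :=
  fold_left f l b.

Definition RDD (A : Type) := list (list A).

Definition is_partitioning {A : Type} (P : list A -> RDD A) : Prop :=
  forall L : list A, exists ps : list (list A),
    concat ps = L /\ Permutation ps (P L).

Definition aggregate_det {A B : Type} (z : B) (sq : B -> A -> B)
  (comb : B -> B -> B) (rdd : RDD A) : B :=
  foldl comb z (map (fun q => foldl sq z q) rdd).

Definition deterministic_aggregate {A B : Type} (z : B) (sq : B -> A -> B)
  (comb : B -> B -> B) : Prop :=
  forall P : list A -> RDD A, is_partitioning P ->
    forall L : list A, aggregate_det z sq comb (P L) = foldl sq z L.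

Definition Gamma {A B : Type} (z : B) (sq : B -> A -> B) (x : B) : Prop :=
  exists L : list A, x = foldl sq z L.

(* Main.v *)
Require Import Defs.
From Stdlib Require Import List Permutation Lia Arith.
Import ListNotations.

Section S.
Context {A B : Type} (z : B) (sq : B -> A -> B) (comb : B -> B -> B).

Lemma part1 : is_partitioning (fun L : list A => [L]).
Proof. intro L. exists [L]. simpl. rewrite app_nil_r. split; auto. Qed.

Lemma part1' : is_partitioning (fun L : list A => [L; []]).
Proof. intro L. exists [L; []]. simpl. rewrite !app_nil_r. split; auto. Qed.

Lemma part2 n : is_partitioning (fun L : list A => [firstn n L; skipn n L]).
Proof. intro L. exists [firstn n L; skipn n L]. simpl. rewrite app_nil_r, firstn_skipn. split; auto. Qed.

Lemma part2s n : is_partitioning (fun L : list A => [skipn n L; firstn n L]).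
Proof. intro L. exists [firstn n L; skipn n L]. simpl. rewrite app_nil_r, firstn_skipn. split; auto. apply perm_swap. Qed.

Lemma part3 n1 n2 : is_partitioning (fun L : list A =>
  [firstn n1 L; firstn n2 (skipn n1 L); skipn n2 (skipn n1 L)]).
Proof. intro L. eexists. split; [|apply Permutation_refl]. simpl.
  rewrite app_nil_r, firstn_skipn, firstn_skipn. reflexivity. Qed.
End S.

Theorem lemma5 (A B : Type) (z : B) (sq : B -> A -> B) (comb : B -> B -> B) :
  deterministic_aggregate z sq comb ->
  (forall x, Gamma z sq x -> comb z x = x /\ comb x z = x) /\
  (forall x y, Gamma z sq x -> Gamma z sq y -> Gamma z sq (comb x y)) /\
  (forall x y, Gamma z sq x -> Gamma z sq y -> comb x y = comb y x) /\
  (forall x y w, Gamma z sq x -> Gamma z sq y -> Gamma z sq w ->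
     comb (comb x y) w = comb x (comb y w)).
Proof.
  intro H.
  assert (Hid : forall L, comb z (foldl sq z L) = foldl sq z L).
  { intro L. pose proof (H _ (part1) L) as E. exact E. }
  assert (Hid' : forall L, comb (foldl sq z L) z = foldl sq z L).
  { intro L. pose proof (H _ (part1') L) as E. unfold aggregate_det in E.
    simpl in E. rewrite Hid in E. exact E. }
  assert (H2 : forall L1 L2, comb (foldl sq z L1) (foldl sq z L2) = foldl sq z (L1 ++ L2)).
  { intros L1 L2. pose proof (H _ (part2 (length L1)) (L1 ++ L2)) as E.
    unfold aggregate_det in E. simpl in E.
    rewrite firstn_app, skipn_app, Nat.sub_diag, firstn_all, skipn_all in E.
    simpl in E. rewrite app_nil_r in E. fold (foldl sq z L1) in E.
    rewrite Hid in E. exact E. }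
  assert (H2s : forall L1 L2, comb (foldl sq z L2) (foldl sq z L1) = foldl sq z (L1 ++ L2)).
  { intros L1 L2. pose proof (H _ (part2s (length L1)) (L1 ++ L2)) as E.
    unfold aggregate_det in E. simpl in E.
    rewrite firstn_app, skipn_app, Nat.sub_diag, firstn_all, skipn_all in E.
    simpl in E. rewrite app_nil_r in E. fold (foldl sq z L2) in E.
    rewrite Hid in E. exact E. }
  assert (H3 : forall L1 L2 L3, comb (comb (foldl sq z L1) (foldl sq z L2)) (foldl sq z L3)
     = foldl sq z (L1 ++ L2 ++ L3)).
  { intros L1 L2 L3. pose proof (H _ (part3 (length L1) (length L2)) (L1 ++ L2 ++ L3)) as E.
    unfold aggregate_det in E. simpl in E.
    rewrite skipn_app, Nat.sub_diag, skipn_all in E. simpl in E.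
    rewrite firstn_app, Nat.sub_diag, firstn_all in E. simpl in E.
    rewrite firstn_app, skipn_app, Nat.sub_diag, firstn_all, skipn_all in E.
    simpl in E. rewrite !app_nil_r in E. fold (foldl sq z L1) in E.
    rewrite Hid in E. exact E. }
  split; [|split; [|split]].
  - intros x [L ->]. auto.
  - intros x y [L1 ->] [L2 ->]. exists (L1 ++ L2). auto.
  - intros x y [L1 ->] [L2 ->]. rewrite H2, H2s. reflexivity.
  - intros x y w [L1 ->] [L2 ->] [L3 ->]. rewrite H3, H2, H2. reflexivity.
Qed.
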